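(* Let $p,\sigma,\bar\theta>0$, let $E:[0,\infty)\to\mathbb R$ be continuous with $|E(t)|\le Ce^{-ct}$ for some $C,c>0$, and let $y:[0,\infty)\to[0,\infty)$ be a non-negative $C^1$ solution of $$\dot y=p\sigma\,y(\bar\theta-y)+E(t).$$ Then either $y(t)\to0$ as $t\to\infty$, or there exist $C',\delta>0$ such that $|y(t)-\bar\theta|\le C'e^{-\delta t}$ for all $t\ge0$. *)

(* Defs.v *)
From Stdlib Require Import Reals.
From Coquelicot Require Import Coquelicot.
Open Scope R_scope.

Definition has_deriv_halfline (f : R -> R) (t d : R) : Prop :=
  limit1_in (fun s => (f s - f t) / (s - t)) (fun s => 0 <= s /\ s <> t) d t.

Definition cont_halfline (f : R -> R) (t : R) : Prop :=
  limit1_in f (fun s => 0 <= s) (f t) t.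

(* Main.v *)
Require Import Defs.
From Stdlib Require Import Reals Lra Classical.
From Coquelicot Require Import Coquelicot.
Open Scope R_scope.

Definition rc (f : R -> R) (t0 : R) : Prop :=
  forall eps, 0 < eps -> exists del, 0 < del /\
    forall s, t0 <= s < t0 + del -> Rabs (f s - f t0) < eps.

Lemma cont_rc f t : continuity_pt f t -> rc f t.
Proof.
  intros H eps He. destruct (H eps He) as [alp [Ha Hb]].
  exists alp; split; [lra|]. intros s Hs.
  destruct (Req_dec s t) as [->|Hne].
  - rewrite Rminus_eq_0, Rabs_R0; lra.
  - apply (Hb s). split.
    + split; [exact I| auto].
    + unfold dist; simpl; unfold R_dist. rewrite Rabs_right; lra.
Qed.

Lemma comb_deriv (f h : R -> R) k t d e: derivable_pt_lim f t d -> is_derive h t e ->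
  derivable_pt_lim (fun s => k * f s + h s) t (k*d + e).
Proof. intros Hf Hh. apply is_derive_Reals. apply is_derive_Reals in Hf.
apply (is_derive_plus (fun s => k * f s) h t (k*d) e); auto.
apply (is_derive_scal f t k d Hf). Qed.

Lemma deriv_cont h t e : is_derive h t e -> continuity_pt h t.
Proof. intros H. apply is_derive_Reals in H.
  exact (derivable_continuous_pt _ _ (exist _ e H)). Qed.

Lemma comb_rc f h k t : rc f t -> continuity_pt h t -> rc (fun s => k * f s + h s) t.
Proof.
  intros Hf Hh eps He.
  set (e1 := eps/2/(Rabs k + 1)).
  assert (Hk1 : 0 < Rabs k + 1) by (pose proof (Rabs_pos k); lra).
  assert (He1 : 0 < e1) by (unfold e1; apply Rdiv_lt_0_compat; lra).
  assert (He1' : (Rabs k + 1) * e1 = eps/2) by (unfold e1; field; lra).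
  destruct (Hf e1 He1) as [d1 [Hd1 H1]].
  destruct (cont_rc h t Hh (eps/2)) as [d2 [Hd2 H2]]; [lra|].
  exists (Rmin d1 d2); split; [apply Rmin_pos; lra|].
  intros s Hs.
  assert (Hs1 : t <= s < t + d1) by (pose proof (Rmin_l d1 d2); lra).
  assert (Hs2 : t <= s < t + d2) by (pose proof (Rmin_r d1 d2); lra).
  specialize (H1 s Hs1). specialize (H2 s Hs2).
  replace (k * f s + h s - (k * f t + h t)) with (k * (f s - f t) + (h s - h t)) by ring.
  eapply Rle_lt_trans; [apply Rabs_triang|]. rewrite Rabs_mult.
  assert (Rabs k * Rabs (f s - f t) <= Rabs k * e1)
    by (apply Rmult_le_compat_l; [apply Rabs_pos| lra]).
  assert (Rabs k * e1 <= eps / 2).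
  { rewrite <- He1'. pose proof (Rabs_pos k). nra. }
  lra.
Qed.

Lemma deriv_rc f t d : has_deriv_halfline f t d -> 0 <= t -> rc f t.
Proof.
  intros H Ht eps He.
  destruct (H 1 ltac:(lra)) as [alp [Ha Hb]].
  assert (Hd1 : 0 < Rabs d + 1) by (pose proof (Rabs_pos d); lra).
  exists (Rmin alp (eps / (Rabs d + 1))); split.
  { apply Rmin_pos; [lra| apply Rdiv_lt_0_compat; lra]. }
  intros s Hs.
  destruct (Req_dec s t) as [->|Hne].
  { rewrite Rminus_eq_0, Rabs_R0; lra. }
  assert (Hs1 : s - t < alp) by (pose proof (Rmin_l alp (eps / (Rabs d + 1))); lra).
  assert (Hs2 : (s - t) < eps / (Rabs d + 1)) by (pose proof (Rmin_r alp (eps / (Rabs d + 1))); lra).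
  assert (Hq := Hb s). simpl in Hq. unfold R_dist in Hq.
  assert (Hq' : Rabs ((f s - f t) / (s - t) - d) < 1).
  { apply Hq. split; [split; lra|]. rewrite Rabs_right; lra. }
  set (q := (f s - f t) / (s - t)) in *.
  assert (Hfq : f s - f t = q * (s - t)) by (unfold q; field; lra).
  rewrite Hfq, Rabs_mult, (Rabs_right (s - t)) by lra.
  assert (Rabs q <= Rabs d + 1).
  { replace q with ((q - d) + d) by ring. pose proof (Rabs_triang (q - d) d). lra. }
  assert (Hx : (Rabs d + 1) * (s - t) < eps).
  { apply Rmult_lt_reg_r with (/ (Rabs d + 1)). apply Rinv_0_lt_compat; lra.
    replace ((Rabs d + 1) * (s - t) * / (Rabs d + 1)) with (s - t) by (field; lra).
    exact Hs2. }
  assert (Rabs q * (s - t) <= (Rabs d + 1) * (s - t)) by (apply Rmult_le_compat_r; lra).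
  lra.
Qed.

Lemma deriv_pt f t d : has_deriv_halfline f t d -> 0 < t -> derivable_pt_lim f t d.
Proof.
  intros H Ht eps He.
  destruct (H eps He) as [alp [Ha Hb]].
  assert (Hp : 0 < Rmin alp t) by (apply Rmin_pos; lra).
  exists (mkposreal _ Hp). intros h Hh0 Hhd. simpl in Hhd.
  pose proof (Rmin_l alp t). pose proof (Rmin_r alp t).
  assert (Hq := Hb (t + h)). simpl in Hq. unfold R_dist in Hq.
  replace (t + h - t) with h in Hq by ring.
  apply Hq. split.
  - split; [|lra]. pose proof (Rabs_le_between' h 0 (Rabs h)). apply Rabs_def2 in Hhd. lra.
  - lra.
Qed.

Lemma barrier f f' t0 t1 :
  (forall t, t0 < t -> derivable_pt_lim f t (f' t)) ->
  rc f t0 ->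
  (forall t, t0 < t -> 0 < f t -> f' t <= 0) ->
  f t0 <= 0 -> t0 <= t1 -> f t1 <= 0.
Proof.
  intros Hd Hc Hs H0 Ht.
  destruct (Rle_or_lt (f t1) 0) as [|Hpos]; auto. exfalso.
  assert (Hlt : t0 < t1).
  { destruct (Req_dec t0 t1) as [<-|]; lra. }
  set (S := fun s => t0 <= s <= t1 /\ f s <= 0).
  destruct (completeness S) as [m [Hub Hlub]].
  { exists t1. intros x [[_ ?] _]; auto. }
  { exists t0. unfold S; lra. }
  assert (Hm0 : t0 <= m) by (apply Hub; unfold S; lra).
  assert (Hm1 : m <= t1).
  { apply Hlub. intros x [[_ ?] _]; auto. }
  assert (Hcm : t0 < m -> continuity_pt f m).
  { intros H. exact (derivable_continuous_pt _ _ (exist _ (f' m) (Hd m H))). }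
  assert (Hrc : rc f m).
  { destruct (Req_dec m t0) as [->|Hne]; auto. apply cont_rc, Hcm; lra. }
  assert (Hfm : f m <= 0).
  { destruct (Req_dec m t0) as [->|Hne]; auto.
    apply Rnot_lt_le; intro Hfp.
    destruct (Hcm ltac:(lra) (f m) Hfp) as [alp [Ha Hb]].
    set (eta := Rmin alp (m - t0) / 2).
    assert (Heta : 0 < eta) by (unfold eta; apply Rdiv_lt_0_compat; [apply Rmin_pos|]; lra).
    assert (Heta2 : eta < alp) by (unfold eta; pose proof (Rmin_l alp (m - t0)); lra).
    destruct (classic (exists s, S s /\ m - eta < s)) as [[s [Ss Hsl]]|Hn].
    - assert (s <= m) by (apply Hub; auto).
      destruct Ss as [_ Hfs].
      destruct (Req_dec s m) as [->|Hsm]; [lra|].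
      assert (Hq := Hb s). simpl in Hq. unfold R_dist in Hq.
      assert (Hab : Rabs (f s - f m) < f m).
      { apply Hq. split; [split; [exact I| auto]|]. rewrite Rabs_left; lra. }
      apply Rabs_def2 in Hab. lra.
    - assert (m <= m - eta); [|lra].
      apply Hlub. intros x Sx. apply Rnot_lt_le; intro. apply Hn. exists x; auto. }
  assert (Hmt : m < t1) by (destruct (Req_dec m t1) as [->|]; lra).
  assert (Hafter : forall s, m < s <= t1 -> 0 < f s).
  { intros s Hs0. apply Rnot_le_lt; intro Hfs.
    assert (s <= m) by (apply Hub; unfold S; split; lra). lra. }
  destruct (Hrc (f t1 - f m) ltac:(lra)) as [del [Hdel Hd2]].
  set (u := m + Rmin del (t1 - m) / 2).
  assert (Hu0 : 0 < Rmin del (t1 - m)) by (apply Rmin_pos; lra).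
  pose proof (Rmin_l del (t1 - m)). pose proof (Rmin_r del (t1 - m)).
  assert (Hu1 : m < u < t1) by (unfold u; lra).
  assert (Hfu : f u < f t1).
  { assert (Hx := Hd2 u ltac:(unfold u; lra)). apply Rabs_def2 in Hx. lra. }
  destruct (MVT_cor2 f f' u t1) as [cc [Heq Hcc]]; [lra| |].
  { intros cc Hcc. apply Hd. lra. }
  assert (f' cc <= 0) by (apply Hs; [lra| apply Hafter; lra]).
  assert (f' cc * (t1 - u) <= 0).
  { nra. }
  lra.
Qed.

Lemma exp_ge1 x : 0 <= x -> 1 <= exp x.
Proof. intros. pose proof (exp_ineq1_le x). lra. Qed.
Lemma exp_mono x y : x <= y -> exp x <= exp y.
Proof. intros [H|H]; [left; apply exp_increasing; auto| rewrite H; lra]. Qed.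
Lemma exp_inv x : exp (- x) * exp x = 1.
Proof. rewrite <- exp_plus. replace (- x + x) with 0 by ring. apply exp_0. Qed.

Theorem lemma3p2 (p sigma thetabar : R) (E y : R -> R) :
  0 < p -> 0 < sigma -> 0 < thetabar ->
  (forall t, 0 <= t -> cont_halfline E t) ->
  (exists C c, 0 < C /\ 0 < c /\ forall t, 0 <= t -> Rabs (E t) <= C * exp (- c * t)) ->
  (forall t, 0 <= t -> 0 <= y t) ->
  (forall t, 0 <= t ->
     has_deriv_halfline y t (p * sigma * y t * (thetabar - y t) + E t)) ->
  (forall t, 0 <= t -> cont_halfline (fun s => p * sigma * y s * (thetabar - y s) + E s) t) ->
  is_lim y p_infty (Finite 0) \/
  (exists C' delta, 0 < C' /\ 0 < delta /\
     forall t, 0 <= t -> Rabs (y t - thetabar) <= C' * exp (- delta * t)).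
Proof.
  intros Hp Hs Hth _ [C [c [HC [Hc HE]]]] Hy0 Hyd _.
  assert (Ha : 0 < p * sigma) by nra.
  set (F := fun t => p * sigma * y t * (thetabar - y t) + E t).
  assert (HyD : forall t, 0 < t -> derivable_pt_lim y t (F t)).
  { intros t Ht. apply deriv_pt; [apply Hyd|]; lra. }
  assert (Hyrc : forall t, 0 <= t -> rc y t).
  { intros t Ht. eapply deriv_rc; [apply Hyd|]; auto. }
  assert (HEb : forall t, 0 <= t -> - (C * exp (- c * t)) <= E t <= C * exp (- c * t)).
  { intros t Ht. specialize (HE t Ht). pose proof (Rle_abs (E t)). pose proof (Rle_abs (- E t)) as H2. rewrite Rabs_Ropp in H2. lra. }
  assert (HGd : forall t K, is_derive (fun s => K + C / c * exp (- c * s)) t (- (C * exp (- c * t)))).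
  { intros t K. auto_derive; [easy| field; lra]. }
  assert (HGd' : forall t K, is_derive (fun s => K - C / c * exp (- c * s)) t (C * exp (- c * t))).
  { intros t K. auto_derive; [easy| field; lra]. }
  assert (HGpos : forall t, 0 < C / c * exp (- c * t)).
  { intros t. apply Rmult_lt_0_compat; [apply Rdiv_lt_0_compat; lra| apply exp_pos]. }
  assert (HGle : forall t, 0 <= t -> C / c * exp (- c * t) <= C / c).
  { intros t Ht. assert (exp (- c * t) <= 1).
    { replace 1 with (exp 0) by apply exp_0. apply exp_mono. nra. }
    assert (0 < C / c) by (apply Rdiv_lt_0_compat; lra). nra. }
  set (M := Rmax (thetabar + C / c) (y 0 + C / c)).
  assert (HM1 : thetabar + C / c <= M) by apply Rmax_l.
  assert (HM2 : y 0 + C / c <= M) by apply Rmax_r.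
  clearbody M.
  assert (Hup : forall t, 0 <= t -> y t <= M).
  { intros t Ht.
    assert (Hb := barrier (fun s => 1 * y s + (- M + C / c * exp (- c * s)))
              (fun s => 1 * F s + - (C * exp (- c * s))) 0 t).
    assert (1 * y t + (- M + C / c * exp (- c * t)) <= 0); [|pose proof (HGpos t); lra].
    apply Hb; auto.
    - intros s Hs0. apply comb_deriv; [apply HyD; auto| apply HGd].
    - apply comb_rc; [apply Hyrc; lra| eapply deriv_cont; apply HGd].
    - intros s Hs0 Hf. pose proof (HGle s ltac:(lra)).
      assert (thetabar <= y s) by lra.
      assert (y s * (thetabar - y s) <= 0) by nra.
      assert (p * sigma * y s * (thetabar - y s) <= 0).
      { replace (p * sigma * y s * (thetabar - y s)) with ((p * sigma) * (y s * (thetabar - y s))) by ring. nra. }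
      pose proof (HEb s ltac:(lra)). unfold F. lra.
    - replace (- c * 0) with 0 by ring. rewrite exp_0. lra. }
  destruct (classic (forall eps, 0 < eps -> exists T, forall t, T < t -> Rabs (y t) < eps)) as [Hl|Hnl].
  { left. apply is_lim_spec. intros eps. destruct (Hl eps (cond_pos eps)) as [T HT].
    exists T. intros t Ht. rewrite Rminus_0_r. apply HT; auto. }
  right.
  assert (He0 : exists e0, 0 < e0 /\ forall T, exists t, T < t /\ e0 <= Rabs (y t)).
  { apply NNPP; intro Hn; apply Hnl; intros eps He.
    apply NNPP; intro Hn2; apply Hn; exists eps; split; auto; intro T.
    apply NNPP; intro Hn3; apply Hn2; exists T; intros t Ht.
    apply Rnot_le_lt; intro; apply Hn3; exists t; auto. }
  destruct He0 as [e0 [He0 Hfreq]].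
  set (beta := Rmin (e0 / 2) (thetabar / 2)).
  assert (Hb1 : beta <= e0 / 2) by apply Rmin_l.
  assert (Hb2 : beta <= thetabar / 2) by apply Rmin_r.
  assert (Hb0 : 0 < beta) by (apply Rmin_pos; lra).
  clearbody beta.
  set (T := C / (c * c * beta) + 1).
  assert (HT : beta * c * T = C / c + beta * c) by (unfold T; field; repeat split; lra).
  assert (HT0 : 0 < T) by (unfold T; assert (0 < C / (c * c * beta)) by (apply Rdiv_lt_0_compat; [lra| repeat apply Rmult_lt_0_compat; lra]); lra).
  clearbody T.
  assert (HGT : forall t, T <= t -> C / c * exp (- c * t) <= beta).
  { intros t Ht.
    pose proof (exp_inv (c * t)) as Hi. replace (- (c * t)) with (- c * t) in Hi by ring.
    pose proof (exp_ineq1_le (c * t)).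
    pose proof (exp_pos (c * t)). pose proof (exp_pos (- c * t)).
    assert (beta * exp (c * t) > C / c).
    { assert (beta * c * t >= beta * c * T) by (apply Rle_ge; apply Rmult_le_compat_l; nra). nra. }
    assert (C / c * exp (- c * t) * exp (c * t) = C / c).
    { rewrite Rmult_assoc, Hi. ring. }
    apply Rlt_le. apply Rmult_lt_reg_r with (exp (c * t)); auto. lra. }
  destruct (Hfreq T) as [t1 [Ht1 Hyt1]].
  rewrite Rabs_right in Hyt1 by (apply Rle_ge, Hy0; lra).
  set (K := Rmin (y t1 - C / c * exp (- c * t1)) (thetabar / 2)).
  assert (HK1 : K <= y t1 - C / c * exp (- c * t1)) by apply Rmin_l.
  assert (HK2 : K <= thetabar / 2) by apply Rmin_r.
  assert (HK0 : 0 < K).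
  { apply Rmin_pos; [|lra]. pose proof (HGT t1 ltac:(lra)). lra. }
  clearbody K.
  assert (Hlow : forall t, t1 <= t -> K <= y t).
  { intros t Ht.
    assert (Hb := barrier (fun s => (-1) * y s + (K + C / c * exp (- c * s)))
              (fun s => (-1) * F s + - (C * exp (- c * s))) t1 t).
    assert ((-1) * y t + (K + C / c * exp (- c * t)) <= 0); [|pose proof (HGpos t); lra].
    apply Hb; auto.
    - intros s Hs0. apply comb_deriv; [apply HyD; lra| apply HGd].
    - apply comb_rc; [apply Hyrc; lra| eapply deriv_cont; apply HGd].
    - intros s Hs0 Hf. pose proof (HGT s ltac:(lra)).
      assert (y s <= thetabar) by lra. pose proof (Hy0 s ltac:(lra)).
      assert (y s * (thetabar - y s) >= 0) by nra.
      assert (p * sigma * y s * (thetabar - y s) >= 0).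
      { replace (p * sigma * y s * (thetabar - y s)) with ((p * sigma) * (y s * (thetabar - y s))) by ring. nra. }
      pose proof (HEb s ltac:(lra)). unfold F. lra.
    - lra. }
  set (aK := p * sigma * K).
  assert (HaK : 0 < aK) by (unfold aK; nra).
  set (delta := Rmin c (aK / 2)).
  assert (Hd1 : delta <= c) by apply Rmin_l.
  assert (Hd2 : delta <= aK / 2) by apply Rmin_r.
  assert (Hd0 : 0 < delta) by (apply Rmin_pos; lra).
  clearbody delta.
  set (z1 := Rabs (y t1 - thetabar)).
  set (A := Rmax (2 * C / aK) (z1 * exp (delta * t1))).
  assert (HA1 : 2 * C / aK <= A) by apply Rmax_l.
  assert (HA2 : z1 * exp (delta * t1) <= A) by apply Rmax_r.
  assert (HA0 : 0 < A).
  { assert (0 < 2 * C / aK) by (apply Rdiv_lt_0_compat; lra). lra. }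
  assert (HAC : C <= aK / 2 * A).
  { assert (aK / 2 * (2 * C / aK) = C) by (field; lra). nra. }
  assert (HAt1 : z1 <= A * exp (- delta * t1)).
  { pose proof (exp_inv (delta * t1)) as Hi. replace (- (delta * t1)) with (- delta * t1) in Hi by ring.
    pose proof (exp_pos (- delta * t1)).
    assert (z1 = z1 * exp (delta * t1) * exp (- delta * t1)).
    { rewrite Rmult_assoc, (Rmult_comm (exp _)), Hi. ring. }
    nra. }
  clearbody A.
  assert (Hphid : forall t Q, is_derive (fun s => Q - A * exp (- delta * s)) t (delta * (A * exp (- delta * t)))).
  { intros t Q. auto_derive; [easy| ring]. }
  assert (Hgphi : forall t, 0 <= t -> C * exp (- c * t) <= aK / 2 * (A * exp (- delta * t))).
  { intros t Ht. assert (exp (- c * t) <= exp (- delta * t)) by (apply exp_mono; nra).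
    pose proof (exp_pos (- c * t)). pose proof (exp_pos (- delta * t)). nra. }
  assert (Hz : forall t, t1 <= t -> Rabs (y t - thetabar) <= A * exp (- delta * t)).
  { intros t Ht. apply Rabs_le. split.
    - assert (Hb := barrier (fun s => (-1) * y s + (thetabar - A * exp (- delta * s)))
              (fun s => (-1) * F s + delta * (A * exp (- delta * s))) t1 t).
      assert ((-1) * y t + (thetabar - A * exp (- delta * t)) <= 0); [|lra].
      apply Hb; auto.
      + intros s Hs0. apply comb_deriv; [apply HyD; lra| apply Hphid].
      + apply comb_rc; [apply Hyrc; lra| eapply deriv_cont; apply Hphid].
      + intros s Hs0 Hf. pose proof (Hgphi s ltac:(lra)). pose proof (Hlow s ltac:(lra)).
        pose proof (exp_pos (- delta * s)).
        set (ph := A * exp (- delta * s)) in *.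
        assert (0 < ph) by (unfold ph; nra).
        assert (p * sigma * y s * (thetabar - y s) >= aK * ph).
        { unfold aK.
          assert ((p * sigma) * ((y s - K) * (thetabar - y s)) >= 0).
          { apply Rle_ge, Rmult_le_pos; [lra|]. nra. }
          assert ((p * sigma) * K * ((thetabar - y s) - ph) >= 0).
          { apply Rle_ge, Rmult_le_pos; [nra| lra]. }
          nra. }
        assert (delta * ph <= aK / 2 * ph) by (apply Rmult_le_compat_r; lra).
        pose proof (HEb s ltac:(lra)). unfold F. lra.
      + unfold z1 in HAt1.
        assert (- (y t1 - thetabar) <= Rabs (y t1 - thetabar)) by (rewrite <- Rabs_Ropp; apply Rle_abs).
        lra.
    - assert (Hb := barrier (fun s => 1 * y s + (- thetabar - A * exp (- delta * s)))
              (fun s => 1 * F s + delta * (A * exp (- delta * s))) t1 t).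
      assert (1 * y t + (- thetabar - A * exp (- delta * t)) <= 0); [|lra].
      apply Hb; auto.
      + intros s Hs0. apply comb_deriv; [apply HyD; lra| apply Hphid].
      + apply comb_rc; [apply Hyrc; lra| eapply deriv_cont; apply Hphid].
      + intros s Hs0 Hf. pose proof (Hgphi s ltac:(lra)). pose proof (Hlow s ltac:(lra)).
        pose proof (exp_pos (- delta * s)).
        set (ph := A * exp (- delta * s)) in *.
        assert (0 < ph) by (unfold ph; nra).
        assert (p * sigma * y s * (thetabar - y s) <= - aK * ph).
        { unfold aK.
          assert ((p * sigma) * ((y s - K) * (y s - thetabar)) >= 0).
          { apply Rle_ge, Rmult_le_pos; [lra|]. nra. }
          assert ((p * sigma) * K * ((y s - thetabar) - ph) >= 0).
          { apply Rle_ge, Rmult_le_pos; [nra| lra]. }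
          nra. }
        assert (delta * ph <= aK / 2 * ph) by (apply Rmult_le_compat_r; lra).
        pose proof (HEb s ltac:(lra)). unfold F. lra.
      + unfold z1 in HAt1. pose proof (Rle_abs (y t1 - thetabar)). lra. }
  exists (Rmax A ((M + thetabar) * exp (delta * t1))), delta.
  pose proof (Rmax_l A ((M + thetabar) * exp (delta * t1))).
  pose proof (Rmax_r A ((M + thetabar) * exp (delta * t1))).
  split; [lra|]. split; [lra|].
  intros t Ht.
  pose proof (exp_pos (- delta * t)).
  destruct (Rle_or_lt t1 t) as [Htt|Htt].
  - specialize (Hz t Htt). nra.
  - assert (Hzb : Rabs (y t - thetabar) <= M + thetabar).
    { pose proof (Hup t Ht). pose proof (Hy0 t Ht). apply Rabs_le. lra. }
    assert (1 <= exp (delta * t1) * exp (- delta * t)).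
    { rewrite <- exp_plus. apply exp_ge1. nra. }
    assert (0 <= M + thetabar) by (pose proof (Hup t Ht); pose proof (Hy0 t Ht); lra).
    nra.
Qed.
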